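(* Let $G=\mathrm{SL}(3,\mathbb R)$, $P$ the upper triangular matrices in $G$, $\mathfrak n$ the strictly lower triangular $3\times3$ real matrices, and let $E_{ij}$ be the matrix units. For $X\in\mathfrak n$ consider the distinguished curve $t\mapsto\exp(tX)P$. Then this curve admits a projective reparameterisation for each of $X=E_{21}$, $X=E_{32}$, $X=E_{21}+E_{32}$, $X=E_{21}+E_{31}$, $X=E_{31}+E_{32}$, $X=E_{31}$, whereas for $X=E_{21}+xE_{31}+E_{32}$ with $x\neq0$ it admits only affine reparameterisations (its reparameterisations as a distinguished curve with origin at $eP$ are only $t\mapsto at$, $a\ne0$). In particular $t\mapsto\exp\big(t(E_{21}+E_{31}+E_{32})\big)P$ admits only affine reparameterisations.
   Context: A distinguished curve in $G/P$ is $t\mapsto q\exp(tY)P$ with $q\in P$, $0\ne Y\in\mathfrak n$. The curve $\gamma(t)=p\exp(tX)P$ admits a projective reparameterisation if there exist $q\in P$, $Y\in\mathfrak n$ with $p\exp(tX)P=q\exp(\tfrac{t}{t+1}Y)P$ for all $t$ near $0$; otherwise its only reparameterisations $\varphi$ with $\varphi(0)=0$ preserving distinguishedness are $t\mapsto at$. *)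

(* Defs.v *)
From HB Require Import structures.
From mathcomp Require Import all_boot all_order all_algebra.
From mathcomp Require Import reals.
Set Implicit Arguments. Unset Strict Implicit. Unset Printing Implicit Defensive.
Import Order.TTheory GRing.Theory Num.Theory.
Local Open Scope ring_scope.

Section Defs.
Variable R : realType.

Definition in_P (A : 'M[R]_3) : Prop :=
  \det A = 1 /\ (forall i j : 'I_3, (j < i)%N -> A i j = 0).

Definition in_n (X : 'M[R]_3) : Prop :=
  forall i j : 'I_3, (i <= j)%N -> X i j = 0.

(* Matrix exponential, written out for elements of n: such X satisfy X^3 = 0,
   so exp X = 1 + X + X^2/2.  Only ever applied to elements of n. *)
Definition exp_n (X : 'M[R]_3) : 'M[R]_3 := 1%:M + X + 2^-1 *: (X *m X).

Definition cosetEq (g h : 'M[R]_3) : Prop := in_P (invmx h *m g).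

(* matrix unit E_ij (1-indexed, as in the paper) *)
Definition Eu (i j : nat) : 'M[R]_3 := delta_mx (inord i.-1) (inord j.-1).

Definition admits_proj_reparam (X : 'M[R]_3) : Prop :=
  exists q : 'M[R]_3, in_P q /\ exists Y : 'M[R]_3, in_n Y /\
    exists eps : R, 0 < eps /\ forall t : R, `|t| < eps ->
      cosetEq (exp_n (t *: X)) (q *m exp_n ((t / (t + 1)) *: Y)).

Definition distinguished_reparam (X : 'M[R]_3) (phi : R -> R) : Prop :=
  exists q : 'M[R]_3, in_P q /\ exists Y : 'M[R]_3, in_n Y /\ Y <> 0 /\
    exists eps : R, 0 < eps /\ forall t : R, `|t| < eps ->
      cosetEq (exp_n (t *: X)) (q *m exp_n (phi t *: Y)).

End Defs.

(* Main.v *)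
Require Import Defs.
From HB Require Import structures.
From mathcomp Require Import all_boot all_order all_algebra.
From mathcomp Require Import reals.
From mathcomp Require Import ring lra.
Import Order.TTheory GRing.Theory Num.Theory.
Local Open Scope ring_scope.

Module Aux.
Set Implicit Arguments. Unset Strict Implicit.
Lemma lin0 (R : realFieldType) (t1 t2 c0 c1 : R) : t1 != t2 ->
  c0 + c1*t1 = 0 -> c0 + c1*t2 = 0 -> c0 = 0 /\ c1 = 0.
Proof.
move=> ht h1 h2.
have h : c1*(t1 - t2) = (c0 + c1*t1) - (c0 + c1*t2) by ring.
rewrite h1 h2 subrr in h.
move/eqP: h; rewrite mulf_eq0 subr_eq0 (negbTE ht) orbF => /eqP c10.
by split => //; move: h1; rewrite c10 mul0r addr0.
Qed.

Lemma quad0 (R : realFieldType) (t1 t2 t3 c0 c1 c2 : R) :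
  t1 != t2 -> t1 != t3 -> t2 != t3 ->
  c0 + c1*t1 + c2*t1^+2 = 0 -> c0 + c1*t2 + c2*t2^+2 = 0 -> c0 + c1*t3 + c2*t3^+2 = 0 ->
  [/\ c0 = 0, c1 = 0 & c2 = 0].
Proof.
move=> h12 h13 h23 h1 h2 h3.
have d1 : (t1 - t3) * ((c1 + c2*t3) + c2*t1) = 0.
  by rewrite -[RHS](subrr 0) -{1}h1 -h3; ring.
have d2 : (t2 - t3) * ((c1 + c2*t3) + c2*t2) = 0.
  by rewrite -[RHS](subrr 0) -{1}h2 -h3; ring.
move/eqP: d1; rewrite mulf_eq0 subr_eq0 (negbTE h13) /= => /eqP d1.
move/eqP: d2; rewrite mulf_eq0 subr_eq0 (negbTE h23) /= => /eqP d2.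
have [e1 e2] := lin0 h12 d1 d2.
move: e1; rewrite e2 mul0r addr0 => e1.
by split => //; move: h1; rewrite e1 e2 !mul0r !addr0.
Qed.

Lemma cub0 (R : realFieldType) (t1 t2 t3 t4 c0 c1 c2 c3 : R) :
  t1 != t2 -> t1 != t3 -> t2 != t3 -> t1 != t4 -> t2 != t4 -> t3 != t4 ->
  c0 + c1*t1 + c2*t1^+2 + c3*t1^+3 = 0 -> c0 + c1*t2 + c2*t2^+2 + c3*t2^+3 = 0 ->
  c0 + c1*t3 + c2*t3^+2 + c3*t3^+3 = 0 -> c0 + c1*t4 + c2*t4^+2 + c3*t4^+3 = 0 ->
  [/\ c0 = 0, c1 = 0, c2 = 0 & c3 = 0].
Proof.
move=> h12 h13 h23 h14 h24 h34 h1 h2 h3 h4.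
have D : forall t, t != t4 -> c0 + c1*t + c2*t^+2 + c3*t^+3 = 0 ->
   (c1 + c2*t4 + c3*t4^+2) + (c2 + c3*t4)*t + c3*t^+2 = 0.
  move=> t ht h.
  have : (t - t4) * ((c1 + c2*t4 + c3*t4^+2) + (c2 + c3*t4)*t + c3*t^+2) = 0.
    by rewrite -[RHS](subrr 0) -{1}h -h4; ring.
  by move/eqP; rewrite mulf_eq0 subr_eq0 (negbTE ht) /= => /eqP.
have [e1 e2 e3] := quad0 h12 h13 h23 (D _ h14 h1) (D _ h24 h2) (D _ h34 h3).
move: e2; rewrite e3 mul0r addr0 => e2.
move: e1; rewrite e2 e3 !mul0r !addr0 => e1.
by split => //; move: h1; rewrite e1 e2 e3 !mul0r !addr0.
Qed.

Lemma quad_eps (R : realFieldType) (eps c0 c1 c2 : R) : 0 < eps ->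
  (forall t, 0 < t < eps -> c0 + c1*t + c2*t^+2 = 0) -> [/\ c0 = 0, c1 = 0 & c2 = 0].
Proof.
move=> he H.
have P : forall n : R, 1 < n -> 0 < eps / n < eps.
  move=> n hn; apply/andP; split; first by apply: divr_gt0 => //; lra.
  by rewrite ltr_pdivrMr; [nra | lra].
apply: (@quad0 _ (eps/2) (eps/3) (eps/4)); try (apply: H; apply: P; lra);
  apply/eqP => h; lra.
Qed.

Lemma cub_eps (R : realFieldType) (eps c0 c1 c2 c3 : R) : 0 < eps ->
  (forall t, 0 < t < eps -> c0 + c1*t + c2*t^+2 + c3*t^+3 = 0) ->
  [/\ c0 = 0, c1 = 0, c2 = 0 & c3 = 0].
Proof.
move=> he H.
have P : forall n : R, 1 < n -> 0 < eps / n < eps.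
  move=> n hn; apply/andP; split; first by apply: divr_gt0 => //; lra.
  by rewrite ltr_pdivrMr; [nra | lra].
apply: (@cub0 _ (eps/2) (eps/3) (eps/4) (eps/5)); try (apply: H; apply: P; lra);
  apply/eqP => h; lra.
Qed.

Lemma key (R : realFieldType) (Q11 Q12 Q13 Q22 Q23 Q33 a b c x eps : R) (s : R -> R) :
 x != 0 -> Q11 != 0 -> Q22 != 0 -> Q33 != 0 -> 0 < eps ->
 (forall t, `|t| < eps -> t != 0 ->
   -(s t * a) * (Q11 + Q12*t + Q13*(x*t + t^+2/2)) + (Q22*t + Q23*(x*t + t^+2/2)) = 0 /\
   (-(s t * c) + (s t)^+2*(a*b)/2) * (Q11 + Q12*t + Q13*(x*t+t^+2/2))
      - s t * b * (Q22*t + Q23*(x*t+t^+2/2)) + Q33*(x*t+t^+2/2) = 0 /\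
   (-(s t * c) + (s t)^+2*(a*b)/2) * (Q12 + Q13*t) - s t * b * (Q22 + Q23*t) + Q33*t = 0) ->
 exists lam, lam != 0 /\ forall t, `|t| < eps -> t != 0 -> s t = lam * t.
Proof.
move=> hx h11 h22 h33 he H.
pose A1 t := Q11 + Q12*t + Q13*(x*t + t^+2/2).
pose N t := Q22 + Q23*(x + t/2).
pose A2 t := Q12 + Q13*t.
pose B2 t := Q22 + Q23*t.
pose K t := 2*a*Q33*(x + t/2) - 2*c*N t.
have PA1 : forall t, `|t| < eps -> t != 0 -> A1 t != 0.
  move=> t ht t0; apply/negP => /eqP hA.
  have [e21 [e31 _]] := H t ht t0.
  have hN : t * N t = 0 by rewrite -[RHS]e21 -/(A1 t) hA /N; ring.
  move/eqP: hN; rewrite mulf_eq0 (negbTE t0) /= => /eqP hN.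
  have hu : Q33 * t * (x + t/2) = 0.
    rewrite -[RHS]e31 -/(A1 t) hA.
    have -> : Q22 * t + Q23 * (x * t + t ^+ 2 / 2) = t * N t by rewrite /N; ring.
    rewrite hN; ring.
  move/eqP: hu; rewrite !mulf_eq0 (negbTE t0) (negbTE h33) /= => /eqP hu.
  by move: hN; rewrite /N hu mulr0 addr0 => /eqP; rewrite (negbTE h22).
have PR1 : forall t, `|t| < eps -> t != 0 -> A1 t * K t = b * t * (N t)^+2.
  move=> t ht t0; have [e21 [e31 _]] := H t ht t0.
  apply/eqP; rewrite -subr_eq0; apply/eqP.
  have : t * (A1 t * K t - b * t * (N t)^+2) = 0.
    transitivity (2*a*A1 t * ((-(s t * c) + (s t)^+2*(a*b)/2) * (Q11 + Q12*t + Q13*(x*t+t^+2/2))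
      - s t * b * (Q22*t + Q23*(x*t+t^+2/2)) + Q33*(x*t+t^+2/2))
      - 2*c*A1 t* (-(s t * a) * (Q11 + Q12*t + Q13*(x*t + t^+2/2)) + (Q22*t + Q23*(x*t + t^+2/2)))
      - b * (-(s t * a) * (Q11 + Q12*t + Q13*(x*t + t^+2/2)) + (Q22*t + Q23*(x*t + t^+2/2)))^+2).
      by rewrite /A1 /K /N; field.
    by rewrite e31 e21; ring.
  by move/eqP; rewrite mulf_eq0 (negbTE t0) /= => /eqP.
have P : forall n : R, 1 < n -> `|eps / n| < eps /\ eps / n != 0.
  move=> n hn; have h0 : 0 < eps / n by apply: divr_gt0 => //; lra.
  rewrite gtr0_norm //; split; last by rewrite gt_eqF.
  by rewrite ltr_pdivrMr; [nra | lra].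
have ha : a != 0.
  apply/negP => /eqP a0.
  have L : forall t, `|t| < eps -> t != 0 -> (Q22 + Q23*x) + (Q23/2) * t = 0.
    move=> t ht t0; have [e21 _] := H t ht t0.
    move: e21; rewrite a0 mulr0 oppr0 mul0r add0r => e21.
    have : t * ((Q22 + Q23*x) + (Q23/2) * t) = 0 by rewrite -[RHS]e21; ring.
    by move/eqP; rewrite mulf_eq0 (negbTE t0) /= => /eqP.
  have [P2 P2'] := P 2 ltac:(lra). have [P3 P3'] := P 3 ltac:(lra).
  have [c0 c1] := lin0 (t1 := eps/2) (t2 := eps/3) ltac:(apply/eqP => h; lra) (L _ P2 P2') (L _ P3 P3').
  have q23 : Q23 = 0 by move: c1 => /eqP; rewrite mulf_eq0 invr_eq0 pnatr_eq0 orbF => /eqP.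
  by move: c0; rewrite q23 mul0r addr0 => /eqP; rewrite (negbTE h22).
pose P3 t := 2*a*Q33*A1 t + A2 t * (2*a*Q33*(x+t/2) - 4*c*N t) - 2*b*N t * B2 t.
have PP3 : forall t, `|t| < eps -> t != 0 -> P3 t = 0.
  move=> t ht t0; have [e21 [e31 e32]] := H t ht t0.
  have R10 := PR1 t ht t0.
  have : a * t * A1 t * P3 t = 0.
    transitivity (2*a^+2*(A1 t)^+2*((-(s t * c) + (s t)^+2*(a*b)/2) * (Q12 + Q13*t) - s t * b * (Q22 + Q23*t) + Q33*t)
      - (-(s t * a) * (Q11 + Q12*t + Q13*(x*t + t^+2/2)) + (Q22*t + Q23*(x*t + t^+2/2)))
        * (2*a*c*A1 t*A2 t - 2*a*b*A2 t*(Q22*t + Q23*(x*t + t^+2/2))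
           + a*b*A2 t*(-(s t * a) * (Q11 + Q12*t + Q13*(x*t + t^+2/2)) + (Q22*t + Q23*(x*t + t^+2/2)))
           + 2*a*b*A1 t*B2 t)
      + a * t * A2 t * (A1 t * K t - b * t * (N t)^+2)).
      by rewrite /P3 /A1 /A2 /B2 /K /N; field.
    by rewrite e32 e21 R10; ring.
  move/eqP; rewrite !mulf_eq0 (negbTE ha) (negbTE t0) (negbTE (PA1 t ht t0)) /=.
  by move/eqP.
pose k := a*Q33.
pose n0 := Q22 + Q23*x.
pose D0 := 2*k*x - 2*c*n0.
pose ka := k - c*Q23.
pose W1 := Q11*ka - b*n0^+2.
pose W2 := (Q12+Q13*x)*ka - b*n0*Q23.
pose W3 := Q13*ka - b*Q23^+2/2.
pose d0 := 2*k*Q11 + Q12*(2*k*x - 4*c*n0) - 2*b*n0*Q22.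
pose d1 := 2*k*(Q12+Q13*x) + Q12*(k - 2*c*Q23) + Q13*(2*k*x - 4*c*n0) - b*Q23*(2*n0 + Q22).
pose d2 := k*Q13 + Q13*(k - 2*c*Q23) - b*Q23^+2.
have pos : forall t, 0 < t < eps -> `|t| < eps /\ t != 0.
  by move=> t /andP[t0 te]; rewrite gtr0_norm // gt_eqF.
have [hc0 hc1 hc2 hc3] : [/\ Q11*D0 = 0, W1 + (Q12+Q13*x)*D0 = 0, W2 + (Q13/2)*D0 = 0 & W3/2 = 0].
  apply: (cub_eps he) => t /pos [ht t0].
  rewrite -[RHS](subrr (b * t * (N t)^+2)) -[X in _ = X - _](PR1 t ht t0).
  by rewrite /W1 /W2 /W3 /D0 /ka /n0 /k /A1 /K /N; field.
have [hd0 hd1 hd2] : [/\ d0 = 0, d1 = 0 & d2 = 0].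
  apply: (quad_eps he) => t /pos [ht t0].
  rewrite -(PP3 t ht t0).
  by rewrite /d0 /d1 /d2 /P3 /n0 /k /A1 /A2 /B2 /N; field.
have hk : k != 0 by rewrite mulf_neq0.
have hD0 : D0 = 0 by move/eqP: hc0; rewrite mulf_eq0 (negbTE h11) /= => /eqP.
rewrite hD0 !mulr0 !addr0 in hc1 hc2.
have hW3 : W3 = 0 by move/eqP: hc3; rewrite mulf_eq0 invr_eq0 pnatr_eq0 orbF => /eqP.
have hn0 : n0 != 0.
  apply/negP => /eqP n00; move: hD0; rewrite /D0 n00 mulr0 subr0 => /eqP.
  by apply/negP; rewrite !mulf_neq0 // pnatr_eq0.
have hkn : ka*n0 = k*Q22.
  have -> : ka*n0 = k*Q22 + Q23*D0/2 by rewrite /ka /D0 /n0; field.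
  by rewrite hD0; ring.
have hka : ka != 0.
  by apply/negP => /eqP k0; move: hkn; rewrite k0 mul0r => /eqP; rewrite eq_sym mulf_eq0 (negbTE hk) (negbTE h22).
have hb : b != 0.
  apply/negP => /eqP b0; move: hc1; rewrite /W1 b0 mul0r subr0 => /eqP.
  by rewrite mulf_eq0 (negbTE h11) (negbTE hka).
have hQ12 : Q12*ka = W2 - x*W3 - x*b*Q23^+2/2 + b*n0*Q23 by rewrite /W2 /W3; field.
have T1 : 2*k*b*x*Q23*(n0 - x*Q23/2) = 0.
  have -> : 2*k*b*x*Q23*(n0 - x*Q23/2) = d0*ka - (2*k*W1 + (W2 - x*W3)*(2*k*x - 4*c*n0)
      + (2*b*n0*Q23 - x*b*Q23^+2)*D0 - b*Q22*Q23*D0).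
    by rewrite /d0 /W1 /W2 /W3 /D0 /ka /n0; field.
  by rewrite hd0 hc1 hc2 hW3 hD0; ring.
have q23 : Q23 = 0.
  apply/eqP; apply: contraT => q0; move/eqP: T1.
  rewrite !mulf_eq0 pnatr_eq0 (negbTE ha) (negbTE h33) (negbTE hb) (negbTE hx) (negbTE q0) /= subr_eq0 => /eqP hn.
  have h22' : Q22 = - n0.
    have e : Q22 = n0 - Q23*x by rewrite /n0; ring.
    by rewrite e hn; field.
  have hka' : ka = - k.
    apply: (mulIf hn0); rewrite hkn h22'; ring.
  have h12 : Q12 = 0.
    move/eqP: hQ12; rewrite hc2 hW3 hn; rewrite -subr_eq0.
    have -> : Q12 * ka - (0 - x * 0 - x * b * Q23 ^+ 2 / 2 + b * (x * Q23 / 2) * Q23) = Q12 * ka by field.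
    by rewrite mulf_eq0 (negbTE hka) orbF => /eqP.
  move: hd1; rewrite /d1 h12.
  have -> : 2 * k * (0 + Q13 * x) + 0 * (k - 2 * c * Q23) + Q13 * (2 * k * x - 4 * c * n0) -
     b * Q23 * (2 * n0 + Q22) = 2*Q13*D0 - b*Q23*n0 by rewrite h22' /D0; ring.
  rewrite hD0 mulr0 sub0r => /eqP; rewrite oppr_eq0 !mulf_eq0 (negbTE hb) (negbTE q0) (negbTE hn0).
  done.
exists (Q33 / (b * Q22)); split.
  by rewrite mulf_neq0 // invr_eq0 mulf_neq0.
move=> t ht t0; have [e21 _] := H t ht t0.
have hN : N t = Q22 by rewrite /N q23; ring.
have hK : K t = D0 + k*t by rewrite /K hN /D0 /n0 q23 /k /=; field.
have hA : A1 t = b*Q22^+2/k.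
  have := PR1 t ht t0; rewrite hK hN hD0 add0r => hh.
  apply: (mulIf hk); rewrite divfK //.
  by apply: (mulIf t0); rewrite -mulrA hh; ring.
have e : s t * a * A1 t = Q22 * t by rewrite -[RHS]subr0 -[X in _ - X]e21 q23 -/(A1 t); ring.
move: e; rewrite hA /k => e.
have nz : a * (b*Q22^+2/(a*Q33)) != 0.
  by rewrite !mulf_neq0 // ?expf_neq0 // invr_eq0 mulf_neq0.
rewrite -[s t](mulfK nz) [s t * _]mulrA e; field.
by rewrite h22 hb h33 ha.
Qed.

Definition mk3 (R : realType) (a b c d e f g h k : R) : 'M[R]_3 :=
  \matrix_(i < 3, j < 3) nth 0 (nth [::] [:: [:: a; b; c]; [:: d; e; f]; [:: g; h; k]] i) j.

Definition i0 : 'I_3 := Ordinal (isT : (0 < 3)%N).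
Definition i1 : 'I_3 := Ordinal (isT : (1 < 3)%N).
Definition i2 : 'I_3 := Ordinal (isT : (2 < 3)%N).

Lemma ord3P (i : 'I_3) : i = i0 \/ i = i1 \/ i = i2.
Proof.
case: i => [[|[|[|m]]] h]; [left|right;left|right;right|by []]; exact: val_inj.
Qed.

Lemma mk3E (R : realType) (A : 'M[R]_3) :
  A = mk3 (A i0 i0) (A i0 i1) (A i0 i2) (A i1 i0) (A i1 i1) (A i1 i2) (A i2 i0) (A i2 i1) (A i2 i2).
Proof.
apply/matrixP => i j; rewrite mxE.
by case: (ord3P i) => [->|[->|->]]; case: (ord3P j) => [->|[->|->]].
Qed.

Lemma mul_mk3 (R : realType) (a b c d e f g h k a' b' c' d' e' f' g' h' k' : R) :
  mk3 a b c d e f g h k *m mk3 a' b' c' d' e' f' g' h' k' =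
  mk3 (a*a' + b*d' + c*g') (a*b' + b*e' + c*h') (a*c' + b*f' + c*k')
      (d*a' + e*d' + f*g') (d*b' + e*e' + f*h') (d*c' + e*f' + f*k')
      (g*a' + h*d' + k*g') (g*b' + h*e' + k*h') (g*c' + h*f' + k*k').
Proof.
apply/matrixP => i j; rewrite !mxE !big_ord_recr big_ord0 /= !mxE /= add0r.
by case: (ord3P i) => [->|[->|->]]; case: (ord3P j) => [->|[->|->]].
Qed.

Lemma add_mk3 (R : realType) (a b c d e f g h k a' b' c' d' e' f' g' h' k' : R) :
  mk3 a b c d e f g h k + mk3 a' b' c' d' e' f' g' h' k' =
  mk3 (a+a') (b+b') (c+c') (d+d') (e+e') (f+f') (g+g') (h+h') (k+k').
Proof.
apply/matrixP => i j; rewrite !mxE.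
by case: (ord3P i) => [->|[->|->]]; case: (ord3P j) => [->|[->|->]].
Qed.

Lemma scale_mk3 (R : realType) (r a b c d e f g h k : R) :
  r *: mk3 a b c d e f g h k = mk3 (r*a) (r*b) (r*c) (r*d) (r*e) (r*f) (r*g) (r*h) (r*k).
Proof.
apply/matrixP => i j; rewrite !mxE.
by case: (ord3P i) => [->|[->|->]]; case: (ord3P j) => [->|[->|->]].
Qed.

Lemma one_mk3 (R : realType) : (1%:M : 'M[R]_3) = mk3 1 0 0 0 1 0 0 0 1.
Proof.
apply/matrixP => i j; rewrite !mxE.
by case: (ord3P i) => [->|[->|->]]; case: (ord3P j) => [->|[->|->]].
Qed.

Lemma mk3_ij (R : realType) (a b c d e f g h k : R) :
  [/\ mk3 a b c d e f g h k i1 i0 = d, mk3 a b c d e f g h k i2 i0 = g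
    & mk3 a b c d e f g h k i2 i1 = h].
Proof. by rewrite !mxE. Qed.

Lemma Eu21 (R : realType) : Eu R 2 1 = mk3 0 0 0 1 0 0 0 0 0.
Proof.
apply/matrixP => i j; rewrite !mxE /=.
by case: (ord3P i) => [->|[->|->]]; case: (ord3P j) => [->|[->|->]];
  rewrite /eq_op /= ?inordK.
Qed.

Lemma Eu32 (R : realType) : Eu R 3 2 = mk3 0 0 0 0 0 0 0 1 0.
Proof.
apply/matrixP => i j; rewrite !mxE /=.
by case: (ord3P i) => [->|[->|->]]; case: (ord3P j) => [->|[->|->]];
  rewrite /eq_op /= ?inordK.
Qed.

Lemma Eu31 (R : realType) : Eu R 3 1 = mk3 0 0 0 0 0 0 1 0 0.
Proof.
apply/matrixP => i j; rewrite !mxE /=.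
by case: (ord3P i) => [->|[->|->]]; case: (ord3P j) => [->|[->|->]];
  rewrite /eq_op /= ?inordK.
Qed.

Lemma det_low (R : realType) (a d e g h k : R) : \det (mk3 a 0 0 d e 0 g h k) = a*e*k.
Proof.
rewrite det_trig; last first.
  apply/is_trig_mxP => i j.
  by case: (ord3P i) => [->|[->|->]]; case: (ord3P j) => [->|[->|->]] //= _; rewrite mxE.
rewrite !big_ord_recr big_ord0 /= !mxE /=; ring.
Qed.

Lemma tr_mk3 (R : realType) (a b c d e f g h k : R) :
  (mk3 a b c d e f g h k)^T = mk3 a d g b e h c f k.
Proof.
apply/matrixP => i j; rewrite !mxE.
by case: (ord3P i) => [->|[->|->]]; case: (ord3P j) => [->|[->|->]].
Qed.

Lemma det_up (R : realType) (a b c e f k : R) : \det (mk3 a b c 0 e f 0 0 k) = a*e*k.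
Proof. by rewrite -det_tr tr_mk3 det_low. Qed.

Lemma in_P_mk3 (R : realType) (a b c e f k : R) : a*e*k = 1 -> in_P (mk3 a b c 0 e f 0 0 k).
Proof.
move=> h; split; first by rewrite det_up.
move=> i j.
by case: (ord3P i) => [->|[->|->]]; case: (ord3P j) => [->|[->|->]] //= _; rewrite mxE.
Qed.

Lemma in_n_mk3 (R : realType) (d g h : R) : in_n (mk3 0 0 0 d 0 0 g h 0).
Proof.
move=> i j.
by case: (ord3P i) => [->|[->|->]]; case: (ord3P j) => [->|[->|->]] //= _; rewrite mxE.
Qed.

Lemma cosetP (R : realType) (g h p : 'M[R]_3) :
  h *m p = g -> \det g != 0 -> in_P p -> cosetEq g h.
Proof.
move=> hp dg Pp; rewrite /cosetEq -hp.
have hu : h \in unitmx.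
  have : g \in unitmx by rewrite unitmxE unitfE.
  by rewrite -hp unitmx_mul => /andP[].
by rewrite mulKmx.
Qed.

Lemma mk3_congr (R : realType) (a b c d e f g h k a' b' c' d' e' f' g' h' k' : R) :
  a = a' -> b = b' -> c = c' -> d = d' -> e = e' -> f = f' -> g = g' -> h = h' -> k = k' ->
  mk3 a b c d e f g h k = mk3 a' b' c' d' e' f' g' h' k'.
Proof. by move=> -> -> -> -> -> -> -> -> ->. Qed.

Lemma exp_mk3 (R : realType) (t d g h : R) :
  exp_n (t *: mk3 0 0 0 d 0 0 g h 0) =
  mk3 1 0 0 (t*d) 1 0 (t*g + 2^-1*(t*h*(t*d))) (t*h) 1.
Proof.
rewrite /exp_n !(scale_mk3, mul_mk3, add_mk3, one_mk3).
apply: mk3_congr; ring.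
Qed.

Lemma det_exp (R : realType) (t d g h : R) :
  \det (exp_n (t *: mk3 0 0 0 d 0 0 g h 0)) = 1.
Proof. by rewrite exp_mk3 det_low !mulr1. Qed.

Ltac nrm := rewrite ?Eu21 ?Eu31 ?Eu32 ?add_mk3 ?(addr0, add0r).

Lemma case1 (R : realType) : admits_proj_reparam (Eu R 2 1).
Proof.
exists (mk3 1 (-1) 0 0 1 0 0 0 1); split; first by apply: in_P_mk3; ring.
exists (Eu R 2 1); split; first by nrm; exact: in_n_mk3.
exists (1/2); split => [|t ht]; first lra.
have t1 : t + 1 != 0 by apply/eqP => h; move: ht; rewrite ltr_norml; lra.
have t1' : 1 + t != 0 by rewrite addrC.
apply: (cosetP (p := mk3 (1+t) 1 0 0 (1+t)^-1 0 0 0 1)).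
- nrm; rewrite !exp_mk3 !mul_mk3; apply: mk3_congr; field; rewrite ?t1 ?t1' //.
- by nrm; rewrite det_exp oner_eq0.
- apply: in_P_mk3; field; rewrite ?t1 ?t1' //.
Qed.

Ltac poscase q Y p :=
  exists q; split; [by apply: in_P_mk3; ring |];
  exists Y; split; [by nrm; exact: in_n_mk3 |];
  exists (1/2); split; [lra |];
  let t := fresh "t" in let ht := fresh "ht" in intros t ht;
  let t1 := fresh "t1" in let t1' := fresh "t1'" in
  assert (t1 : t + 1 != 0) by (apply/eqP => h; move: ht; rewrite ltr_norml; lra);
  assert (t1' : 1 + t != 0) by (rewrite addrC; exact t1);
  apply: (cosetP (p := p t)); [
    nrm; rewrite !exp_mk3 !mul_mk3; apply: mk3_congr; field; rewrite ?t1 ?t1' //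
  | by nrm; rewrite det_exp oner_eq0
  | apply: in_P_mk3; field; rewrite ?t1 ?t1' // ].

Lemma case2 (R : realType) : admits_proj_reparam (Eu R 3 2).
Proof.
poscase (mk3 1 0 0 0 1 (-1) 0 0 (1:R)) (Eu R 3 2) (fun t : R => mk3 1 0 0 0 (1+t) 1 0 0 (1+t)^-1).
Qed.

Lemma case3 (R : realType) : admits_proj_reparam (Eu R 2 1 + Eu R 3 2).
Proof.
poscase (mk3 1 (-2) 2 0 1 (-2) 0 0 (1:R)) (Eu R 2 1 + Eu R 3 2)
  (fun t : R => mk3 ((1+t)^+2) (2*(1+t)) 2 0 1 (2*(1+t)^-1) 0 0 (((1+t)^-1)^+2)).
Qed.

Lemma case4 (R : realType) : admits_proj_reparam (Eu R 2 1 + Eu R 3 1).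
Proof.
poscase (mk3 1 0 (-1) 0 1 0 0 0 (1:R)) (Eu R 2 1 + Eu R 3 1)
  (fun t : R => mk3 (1+t) 0 1 0 1 (-(t/(t+1))) 0 0 ((1+t)^-1)).
Qed.

Lemma case5 (R : realType) : admits_proj_reparam (Eu R 3 1 + Eu R 3 2).
Proof.
poscase (mk3 1 0 (-1) 0 1 0 0 0 (1:R)) (Eu R 3 1 + Eu R 3 2)
  (fun t : R => mk3 (1+t) t 1 0 1 0 0 0 ((1+t)^-1)).
Qed.

Lemma case6 (R : realType) : admits_proj_reparam (Eu R 3 1).
Proof.
poscase (mk3 1 0 (-1) 0 1 0 0 0 (1:R)) (Eu R 3 1)
  (fun t : R => mk3 (1+t) 0 1 0 1 0 0 0 ((1+t)^-1)).
Qed.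

Lemma neg_core (R : realType) (x : R) (q Y : 'M[R]_3) (s : R -> R) (eps : R) :
 x != 0 -> in_P q -> in_n Y -> 0 < eps ->
 (forall t, `|t| < eps -> cosetEq (exp_n (t *: (Eu R 2 1 + x *: Eu R 3 1 + Eu R 3 2))) (q *m exp_n (s t *: Y))) ->
 exists lam, lam != 0 /\ forall t, `|t| < eps -> t != 0 -> s t = lam * t.
Proof.
move=> hx [dq Pq] nY he H.
have hX : Eu R 2 1 + x *: Eu R 3 1 + Eu R 3 2 = mk3 0 0 0 1 0 0 x 1 0.
  by rewrite Eu21 Eu31 Eu32 !scale_mk3 !add_mk3; apply: mk3_congr; ring.
set q11 := q i0 i0; set q12 := q i0 i1; set q13 := q i0 i2;
set q22 := q i1 i1; set q23 := q i1 i2; set q33 := q i2 i2.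
have hq : q = mk3 q11 q12 q13 0 q22 q23 0 0 q33.
  by rewrite {1}(mk3E q) (Pq i1 i0 isT) (Pq i2 i0 isT) (Pq i2 i1 isT).
set a := Y i1 i0; set c := Y i2 i0; set b := Y i2 i1.
have hY : Y = mk3 0 0 0 a 0 0 c b 0.
  rewrite {1}(mk3E Y) (nY i0 i0 isT) (nY i0 i1 isT) (nY i0 i2 isT) (nY i1 i1 isT) (nY i1 i2 isT).
  by rewrite (nY i2 i2 isT).
have d1 : q11 * q22 * q33 = 1 by rewrite -dq hq det_up.
have n11 : q11 != 0 by apply/eqP => h; move: d1; rewrite h !mul0r => /eqP; rewrite eq_sym oner_eq0.
have n22 : q22 != 0 by apply/eqP => h; move: d1; rewrite h mulr0 mul0r => /eqP; rewrite eq_sym oner_eq0.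
have n33 : q33 != 0 by apply/eqP => h; move: d1; rewrite h mulr0 => /eqP; rewrite eq_sym oner_eq0.
apply: (@key R (q11^-1) (-(q12/(q11*q22))) ((q12*q23 - q13*q22)/(q11*q22*q33))
   (q22^-1) (-(q23/(q22*q33))) (q33^-1) a b c x eps s hx _ _ _ he).
- by rewrite invr_neq0.
- by rewrite invr_neq0.
- by rewrite invr_neq0.
move=> t ht t0.
pose Em := mk3 1 0 0 (-(s t * a)) 1 0 (-(s t*c) + 2^-1*(s t*b*(s t*a))) (-(s t*b)) 1.
pose Qm := mk3 (q11^-1) (-(q12/(q11*q22))) ((q12*q23 - q13*q22)/(q11*q22*q33))
   0 (q22^-1) (-(q23/(q22*q33))) 0 0 (q33^-1).
have hinv : (q *m exp_n (s t *: Y)) *m (Em *m Qm) = 1%:M.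
  rewrite hq hY exp_mk3 /Em /Qm !mul_mk3 one_mk3; by apply: mk3_congr; field; rewrite ?n11 ?n22 ?n33.
have hinv' : invmx (q *m exp_n (s t *: Y)) = Em *m Qm.
  have [u _] := mulmx1_unit hinv.
  by rewrite -[RHS](mulKmx u) hinv mulmx1.
have [_ PP] := H t ht.
rewrite hinv' hX exp_mk3 /Em /Qm !mul_mk3 in PP.
have e1 := PP i1 i0 isT; have e2 := PP i2 i0 isT; have e3 := PP i2 i1 isT.
rewrite !mxE /= in e1 e2 e3.
split; [|split].
- by apply: (etrans _ e1); field; rewrite ?n11 ?n22 ?n33.
- by apply: (etrans _ e2); field; rewrite ?n11 ?n22 ?n33.
- by apply: (etrans _ e3); field; rewrite ?n11 ?n22 ?n33.
Qed.

End Aux.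
Import Aux.

Theorem mainTheorem5 (R : realType) :
  admits_proj_reparam (Eu R 2 1) /\
  admits_proj_reparam (Eu R 3 2) /\
  admits_proj_reparam (Eu R 2 1 + Eu R 3 2) /\
  admits_proj_reparam (Eu R 2 1 + Eu R 3 1) /\
  admits_proj_reparam (Eu R 3 1 + Eu R 3 2) /\
  admits_proj_reparam (Eu R 3 1) /\
  (forall x : R, x != 0 ->
        let X := Eu R 2 1 + x *: Eu R 3 1 + Eu R 3 2 in
        ~ admits_proj_reparam X /\
        (forall phi : R -> R, phi 0 = 0 -> distinguished_reparam X phi ->
           exists a : R, a != 0 /\ exists eps : R, 0 < eps /\
             forall t : R, `|t| < eps -> phi t = a * t)).
Proof.
split; first exact: case1.
split; first exact: case2.
split; first exact: case3.
split; first exact: case4.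
split; first exact: case5.
split; first exact: case6.
move=> x hx X; split.
  move=> [q [Pq [Y [nY [eps [he H]]]]]].
  have [lam [hl Hl]] := neg_core (s := fun t => t / (t + 1)) hx Pq nY he H.
  have E : forall t, 0 < t < eps -> lam * t + lam = 1.
    move=> t /andP[tp te].
    have ht : `|t| < eps by rewrite gtr0_norm.
    have t0 : t != 0 by rewrite gt_eqF.
    have t1 : t + 1 != 0 by rewrite gt_eqF // ltr_wpDl // ltW.
    have h := Hl t ht t0.
    have h' : lam * t * (t + 1) = t by rewrite -h /= divfK.
    apply: (mulIf t0); rewrite mul1r -[RHS]h'; ring.
  have e1 := E (eps/2) ltac:(apply/andP; split; lra).
  have e2 := E (eps/3) ltac:(apply/andP; split; lra).
  have : lam * eps = 0 by lra.
  by move/eqP; rewrite mulf_eq0 (negbTE hl) /= => /eqP e0; move: he; rewrite e0 ltxx.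
move=> phi phi0 [q [Pq [Y [nY [_ [eps [he H]]]]]]].
have [lam [hl Hl]] := neg_core (s := phi) hx Pq nY he H.
exists lam; split => //; exists eps; split => // t ht.
case: (eqVneq t 0) => [->|t0]; first by rewrite phi0 mulr0.
exact: Hl.
Qed.
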